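(* Let $\mu^*\in\mathbb P(S)$ with $\mu^*(x)>0$ for all $x\in S$. Then there exists $\alpha_0\in(\tfrac12,1)$ such that for every $\alpha\in[\alpha_0,1]$ there is a kernel $\bar Q^*$ (i.e. $\bar Q^*(\cdot|x)$ a probability on $D(x)$ for each $x$, equivalently $Q^*=\mu^*\otimes\bar Q^*\in\mathbb P(D)$) with $\mu^*=\mu^*P^{\bar Q^*}$, i.e. $\mu^*$ is a stationary distribution of the transition matrix $P^{\bar Q^*}$.
   Context: $S=\{1,\dots,d\}$ are the nodes of a connected undirected graph with edge set $E$ (no loops), and $D(x):=\{x'\in S:(x,x')\in E\}\cup\{x\}\subset A:=S$; assume $|D(x)|\ge2$ for all $x$. Fix $\alpha\in(0,1]$. For $a\in D(x)$ and $x'\in S$ let $p^{x,a}(x'):=\alpha$ if $x'=a$, $p^{x,a}(x'):=\frac{1-\alpha}{|D(x)|-1}$ if $x'\in D(x)\setminus\{a\}$, and $p^{x,a}(x'):=0$ otherwise (an individual at $x$ choosing $a$ moves to $a$ with probability $\alpha$ and otherwise uniformly to another element of $D(x)$). For a kernel $\bar Q$ with $\bar Q(\cdot|x)$ a probability on $D(x)$, $P^{\bar Q}$ is the $d\times d$ matrix with entries $p^{\bar Q}_{xx'}:=\sum_{a\in D(x)}p^{x,a}(x')\bar Q(a|x)$; $\mu$ is treated as a row vector and $\mu\otimes\bar Q$ denotes the measure $(x,a)\mapsto\mu(x)\bar Q(a|x)$ on $D:=\{(x,a):a\in D(x)\}$. *)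

(* Defs.v *)
From HB Require Import structures.
From mathcomp Require Import all_boot all_order all_algebra.
From mathcomp Require Import reals.
Set Implicit Arguments. Unset Strict Implicit. Unset Printing Implicit Defensive.
Import Order.TTheory GRing.Theory Num.Theory.
Local Open Scope ring_scope.

(* S = 'I_d, graph given by an edge relation E : rel 'I_d. *)

Definition simple_connected_graph (d : nat) (E : rel 'I_d) : Prop :=
  [/\ symmetric E, irreflexive E & forall x y : 'I_d, connect E x y].

Definition Dset (d : nat) (E : rel 'I_d) (x : 'I_d) : {set 'I_d} :=
  [set x' | E x x' || (x' == x)].

Definition ptrans (R : realType) (d : nat) (E : rel 'I_d) (alpha : R)
    (x a x' : 'I_d) : R :=
  if x' \in Dset E x then
    (if x' == a then alpha else (1 - alpha) / (#|Dset E x|.-1)%:R)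
  else 0.

Definition is_kernel (R : realType) (d : nat) (E : rel 'I_d)
    (Qbar : 'I_d -> 'I_d -> R) : Prop :=
  forall x : 'I_d,
    (forall a, 0 <= Qbar x a) /\ (forall a, a \notin Dset E x -> Qbar x a = 0)
    /\ \sum_(a in Dset E x) Qbar x a = 1.

Definition Pmat (R : realType) (d : nat) (E : rel 'I_d) (alpha : R)
    (Qbar : 'I_d -> 'I_d -> R) : 'M[R]_d :=
  \matrix_(x, x') \sum_(a in Dset E x) ptrans E alpha x a x' * Qbar x a.

Definition is_prob (R : realType) (d : nat) (mu : 'rV[R]_d) : Prop :=
  (forall x, 0 <= mu 0 x) /\ \sum_x mu 0 x = 1.

(* Main.v *)
Require Import Defs.
From HB Require Import structures.
From mathcomp Require Import all_boot all_order all_algebra.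
From mathcomp Require Import reals.
From mathcomp Require Import ring lra.
Import Order.TTheory GRing.Theory Num.Theory.
Local Open Scope ring_scope.

Lemma Pmat_entry (R : realType) (d : nat) (E : rel 'I_d) (alpha : R)
  (Q : 'I_d -> 'I_d -> R) x x' :
  \sum_(a in Dset E x) Q x a = 1 ->
  Pmat E alpha Q x x' =
  if x' \in Dset E x then
    (1 - alpha) / (#|Dset E x|.-1)%:R
    + (alpha - (1 - alpha) / (#|Dset E x|.-1)%:R) * Q x x'
  else 0.
Proof.
move=> hQ; rewrite mxE; case: ifP => hx'; last first.
  by apply: big1 => a _; rewrite /ptrans hx' mul0r.
set b := (1 - alpha) / _.
transitivity (\sum_(a in Dset E x)
   (b * Q x a + (alpha - b) * (if a == x' then Q x a else 0))).
  apply: eq_bigr => a _; rewrite /ptrans hx' -/b eq_sym.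
  by case: eqP => _; ring.
rewrite big_split /= -mulr_sumr hQ mulr1 -mulr_sumr.
rewrite (bigD1 x') //= eqxx big1 ?addr0 // => a /andP[_ /negbTE ->].
by [].
Qed.

Lemma card_nbr (d : nat) (E : rel 'I_d) (hE : simple_connected_graph E) x' :
  #|[pred x | (x != x') && E x x']| = (#|Dset E x'|.-1)%N.
Proof.
case: hE => hs hi _.
rewrite (cardD1 x' (Dset E x')) inE eqxx orbT /=.
apply: eq_card => x; rewrite !inE /=.
case: eqP => [->|_] /=; first by [].
by rewrite orbF hs.
Qed.

Theorem mainTheorem13 (R : realType) (d : nat) (E : rel 'I_d)
  (hE : simple_connected_graph E)
  (hD : forall x : 'I_d, (2 <= #|Dset E x|)%N)
  (mu : 'rV[R]_d) (hmu : is_prob mu) (hpos : forall x, 0 < mu 0 x) :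
  exists alpha0 : R, 1/2 < alpha0 < 1 /\
    forall alpha : R, alpha0 <= alpha <= 1 ->
      exists Qbar : 'I_d -> 'I_d -> R,
        is_kernel E Qbar /\ mu = mu *m Pmat E alpha Qbar.
Proof.
have [hs hi _] := hE.
have [hmu0 hsum] := hmu.
have hle1 : forall x, mu 0 x <= 1.
  move=> x; rewrite -hsum (bigD1 x) //= lerDl sumr_ge0 //.
have [x0 _ | hnone] := pickP (fun _ : 'I_d => true); last first.
  move: hsum; rewrite big1 => [/eqP|y _]; first by rewrite eq_sym oner_eq0.
  by have := hnone y.
set m := \prod_x mu 0 x.
have hm0 : 0 < m by apply: prodr_gt0.
have hmle : forall x, m <= mu 0 x.
  move=> x; rewrite /m (bigD1 x) //=.
  have h1 : \prod_(i | i != x) mu 0 i <= 1.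
    by apply: prodr_ile1 => i _; rewrite hmu0 hle1.
  have h2 : 0 <= \prod_(i | i != x) mu 0 i by apply: prodr_ge0.
  have := hmu0 x; nra.
have hd : (0 < d)%N := leq_ltn_trans (leq0n x0) (ltn_ord x0).
have dR : 1 <= d%:R :> R by rewrite ler1n.
set δ := m / (4 * d%:R).
have hδ : δ * (4 * d%:R) = m by rewrite /δ mulfVK //; lra.
have m1 : m <= 1 by apply: le_trans (hmle x0) (hle1 x0).
have hδ0 : 0 < δ by nra.
have hδ1 : δ <= 1/4 by nra.
exists (1 - δ); split; first by apply/andP; split; lra.
move=> alpha /andP[ha0 ha1].
set ε := 1 - alpha.
have hε : 0 <= ε <= δ by rewrite /ε; apply/andP; split; lra.
pose K x : R := (#|Dset E x|.-1)%:R.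
have hK : forall x, 1 <= K x <= d%:R.
  move=> x; rewrite /K ler1n ler_nat; apply/andP; split.
    by have := hD x; case: #|Dset E x| => [|[|n]].
  by apply: leq_trans (leq_pred _) _; have := max_card (mem (Dset E x)); rewrite card_ord.
pose b x := ε / K x.
pose c x := alpha - b x.
pose q x := (ε - mu 0 x * b x) / (mu 0 x * c x).
have hbK : forall x, b x * K x = ε.
  by move=> x; rewrite /b mulfVK //; have := hK x; lra.
have hb : forall x, 0 <= b x <= ε.
  move=> x; have := hbK x; have := hK x; move=> /andP[h1 h2] h3.
  move/andP: hε => [he1 he2].
  apply/andP; split; nra.
have hc : forall x, 1/2 <= c x.
  by move=> x; have := hb x; have := hε; rewrite /c /ε; lra.
have hq : forall x, q x * (mu 0 x * c x) = ε - mu 0 x * b x.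
  move=> x; rewrite /q mulfVK //; have := hc x; have := hpos x; nra.
have hmc : forall x, 0 < mu 0 x * c x.
  by move=> x; apply: mulr_gt0 => //; have := hc x; lra.
have hq0 : forall x, 0 <= q x.
  move=> x; rewrite /q divr_ge0 //; last exact: ltW.
  have := hle1 x; have := hb x; have := hmu0 x; move=> h1 /andP[h2 h3] h4.
  rewrite subr_ge0; nra.
have hKq : forall x, K x * q x <= 1.
  move=> x; rewrite /q mulrA ler_pdivrMr // mul1r.
  have := hK x; move=> /andP[h1 h2].
  have := hb x; move=> /andP[h3 h4].
  move/andP: hε => [he1 he2].
  have h5 : K x * ε <= d%:R * δ.
    apply: (le_trans (y := d%:R * ε)); [apply: ler_wpM2r | apply: ler_wpM2l]; lra.
  have h6 : d%:R * δ <= mu 0 x / 4.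
    have := hmle x; rewrite -hδ; lra.
  have h7 : 0 <= K x * (mu 0 x * b x).
    by apply: mulr_ge0; [lra | apply: mulr_ge0; [exact: hmu0 | lra]].
  have h8 : mu 0 x * (1/2) <= mu 0 x * c x by apply: ler_wpM2l; [exact: hmu0 | exact: hc].
  have := hpos x; lra.
pose Qbar x a := if a \in Dset E x then (if a == x then 1 - K x * q x else q x) else 0.
have hxD : forall x, x \in Dset E x by move=> x; rewrite inE eqxx orbT.
have hQs : forall x, \sum_(a in Dset E x) Qbar x a = 1.
  move=> x; rewrite (bigD1 x) //= /Qbar hxD eqxx.
  transitivity (1 - K x * q x + \sum_(a in [pred a | (a \in Dset E x) && (a != x)]) q x).
    congr (_ + _); apply: eq_big => a; first by [].
    by move=> /andP[-> /negbTE ->].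
  rewrite sumr_const.
  have -> : #|[pred a | (a \in Dset E x) && (a != x)]| = (#|Dset E x|.-1)%N.
    rewrite (cardD1 x (Dset E x)) hxD /=; apply: eq_card => a.
    by rewrite !inE andbC.
  by rewrite -mulr_natr -/(K x); lra.
exists Qbar; split.
  move=> x; split; last split; last by [].
  - move=> a; rewrite /Qbar; case: ifP => _; last by [].
    by case: ifP => _; [have := hKq x; lra | exact: hq0].
  - by move=> a /negbTE ha; rewrite /Qbar ha.
apply/rowP => j; rewrite mxE (bigD1 j) //= (@Pmat_entry _ _ _ alpha _ j j (hQs j)) hxD.
rewrite /Qbar hxD eqxx -/ε -/(K j) -/(b j) -/(c j).
transitivity (mu 0 j * (b j + c j * (1 - K j * q j)) +
   \sum_(i in [pred i | (i != j) && E i j]) ε); last first.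
  congr (_ + _); rewrite big_mkcond [RHS]big_mkcond; apply: eq_bigr => i _.
  rewrite inE /=; case: (eqVneq i j) => [->|hij] //=.
  rewrite (@Pmat_entry _ _ _ alpha _ i j (hQs i)) /Qbar !inE eq_sym (negbTE hij) orbF.
  case: ifP => _; last by rewrite mulr0.
  rewrite -/ε -/(K i) -/(b i) -/(c i).
  have := hq i; move=> h.
  have -> : mu 0 i * (b i + c i * q i) = mu 0 i * b i + q i * (mu 0 i * c i) by ring.
  rewrite h; ring.
rewrite sumr_const card_nbr // -mulr_natr -/(K j).
have -> : mu 0 j * (b j + c j * (1 - K j * q j)) =
   mu 0 j * b j + mu 0 j * c j - K j * (q j * (mu 0 j * c j)) by ring.
rewrite hq.
have e2 : mu 0 j * (b j * K j) = mu 0 j * ε by rewrite hbK.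
move: e2; rewrite /c /ε; lra.
Qed.
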